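(* Let $\kappa$ be a cardinal, $\mathbb{F}$ a field, and $V$ the vector space over $\mathbb{F}$ presented by generators $x_\alpha,y_\alpha,z_\alpha$ ($\alpha\in\kappa$) and relations $x_\alpha+y_\alpha+z_\alpha=0$. Let $F\colon\mathcal{P}(\kappa)^3\to\mathrm{Sub}(V)$, $F(A,B,C)=\mathrm{Span}\{x_\alpha:\alpha\in A\}+\mathrm{Span}\{y_\beta:\beta\in B\}+\mathrm{Span}\{z_\gamma:\gamma\in C\}$, and $G\colon\mathrm{Sub}(V)\to\mathcal{P}(\kappa)^3$, $G(W)=(\{\alpha:x_\alpha\in W\},\{\beta:y_\beta\in W\},\{\gamma:z_\gamma\in W\})$. Then for all $(A,B,C)\in\mathcal{P}(\kappa)^3$, $G(F(A,B,C))=(A\cup(B\cap C),\ B\cup(A\cap C),\ C\cup(A\cap B))$.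
   Context: $\mathcal{P}(\kappa)$ is the power set of $\kappa$; $\mathrm{Sub}(V)$ is the lattice of subspaces of $V$. *)

(* Defs.v *)
From HB Require Import structures.
From mathcomp Require Import all_boot all_algebra.
From mathcomp Require Import boolp classical_sets.
Set Implicit Arguments. Unset Strict Implicit. Unset Printing Implicit Defensive.
Import GRing.Theory.
Local Open Scope ring_scope.
Local Open Scope classical_set_scope.

Definition lspan (F : fieldType) (V : lmodType F) (S : set V) : set V :=
  [set v | exists (n : nat) (c : 'I_n -> F) (s : 'I_n -> V),
             (forall i, S (s i)) /\ v = \sum_(i < n) c i *: s i].

Definition subsum (F : fieldType) (V : lmodType F) (U W : set V) : set V :=
  [set v | exists u w, U u /\ W w /\ v = u + w].

(* V is the F-vector space presented by generators x_a, y_a, z_a (a in K)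
   and relations x_a + y_a + z_a = 0: the relations hold, the generators
   span V, and (V, x, y, z) has the universal property of the presentation. *)
Definition presented_xyz (F : fieldType) (V : lmodType F) (K : Type)
    (x y z : K -> V) : Prop :=
  [/\ (forall a, x a + y a + z a = 0),
      (forall v, lspan (range x `|` range y `|` range z) v) &
      (forall (W : lmodType F) (x' y' z' : K -> W),
         (forall a, x' a + y' a + z' a = 0) ->
         exists f : {linear V -> W},
           forall a, [/\ f (x a) = x' a, f (y a) = y' a & f (z a) = z' a])].

Definition Fmap (F : fieldType) (V : lmodType F) (K : Type) (x y z : K -> V)
    (A B C : set K) : set V :=
  subsum (subsum (lspan (x @` A)) (lspan (y @` B))) (lspan (z @` C)).

Definition Gmap (F : fieldType) (V : lmodType F) (K : Type) (x y z : K -> V)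
    (W : set V) : set K * set K * set K :=
  ([set a | W (x a)], [set b | W (y b)], [set c | W (z c)]).

(* Main.v *)
Require Import Defs.
From HB Require Import structures.
From mathcomp Require Import all_boot all_algebra.
From mathcomp Require Import boolp classical_sets.
Local Open Scope ring_scope.
Local Open Scope classical_set_scope.
Import GRing.Theory.

Section Aux.
Variables (K : Type) (F : fieldType) (V : lmodType F).

Lemma lspan_kill (f : {linear V -> F^o}) (S : set V) :
  (forall v, S v -> f v = 0) -> forall v, lspan S v -> f v = 0.
Proof.
move=> hS v [n [c [s [hs ->]]]].
rewrite linear_sum big1 // => i _.
by rewrite linearZ /= hS // scaler0.
Qed.

Lemma lspan_in (S : set V) v : S v -> lspan S v.
Proof.
move=> Sv; exists 1%N, (fun _ => 1), (fun _ => v); split => //.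
by rewrite big_ord1 scale1r.
Qed.

Lemma lspan_opp (S : set V) v : S v -> lspan S (- v).
Proof.
move=> Sv; exists 1%N, (fun _ => -1), (fun _ => v); split => //.
by rewrite big_ord1 scaleN1r.
Qed.

Lemma lspan0 (S : set V) : lspan S 0.
Proof.
by exists 0%N, (fun _ => 0), (fun _ => 0); split => [[]|]; rewrite ?big_ord0.
Qed.

Variables (x y z : K -> V) (hV : presented_xyz x y z) (A B C : set K).

Lemma Fmap_kill (f : {linear V -> F^o}) :
  (forall b, A b -> f (x b) = 0) -> (forall b, B b -> f (y b) = 0) ->
  (forall b, C b -> f (z b) = 0) ->
  forall v, Fmap x y z A B C v -> f v = 0.
Proof.
move=> hA hB hC v [u [w [[u1 [u2 [hu1 [hu2 ->]]]] [hw ->]]]].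
rewrite !linearD /=.
have -> : f u1 = 0 by move: hu1; apply: lspan_kill => _ [b Ab <-]; exact: hA.
have -> : f u2 = 0 by move: hu2; apply: lspan_kill => _ [b Ab <-]; exact: hB.
have -> : f w = 0 by move: hw; apply: lspan_kill => _ [b Ab <-]; exact: hC.
by rewrite !addr0.
Qed.

Definition deltaK (a b : K) : F := if pselect (b = a) then 1 else 0.

Lemma key a (s1 s2 s3 : F) : s1 + s2 + s3 = 0 ->
  (A a -> s1 = 0) -> (B a -> s2 = 0) -> (C a -> s3 = 0) ->
  [/\ Fmap x y z A B C (x a) -> s1 = 0,
      Fmap x y z A B C (y a) -> s2 = 0 &
      Fmap x y z A B C (z a) -> s3 = 0].
Proof.
case: hV => _ _ univ hs hA hB hC.
have rel : forall b, (s1 * deltaK a b : F^o) + s2 * deltaK a b + s3 * deltaK a b = 0.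
  by move=> b; rewrite -!mulrDl hs mul0r.
have [f hf] := univ (F^o) _ _ _ rel.
have van : forall (s : F) (D : set K), (D a -> s = 0) -> forall b, D b -> s * deltaK a b = 0.
  move=> s D hD b Db; rewrite /deltaK; destruct (pselect (b = a)) as [eba|neba]; simpl.
    by subst b; rewrite hD // mul0r.
  exact: mulr0.
have kill : (forall b, A b -> f (x b) = 0) -> (forall b, B b -> f (y b) = 0) ->
  (forall b, C b -> f (z b) = 0) -> forall v, Fmap x y z A B C v -> f v = 0.
  by move=> ? ? ?; apply: Fmap_kill.
have da : deltaK a a = 1 by rewrite /deltaK; destruct (pselect (a = a)).
have K1 : forall b, A b -> f (x b) = 0.
  by move=> b Db; case: (hf b) => -> _ _; exact: (van _ _ hA).
have K2 : forall b, B b -> f (y b) = 0.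
  by move=> b Db; case: (hf b) => _ -> _; exact: (van _ _ hB).
have K3 : forall b, C b -> f (z b) = 0.
  by move=> b Db; case: (hf b) => _ _ ->; exact: (van _ _ hC).
split=> hm; have := kill K1 K2 K3 _ hm; case: (hf a) => h1 h2 h3.
- by rewrite h1 da mulr1.
- by rewrite h2 da mulr1.
- by rewrite h3 da mulr1.
Qed.

End Aux.

Theorem lemma6p2 (K : Type) (F : fieldType) (V : lmodType F) (x y z : K -> V)
    (hV : presented_xyz x y z) (A B C : set K) :
  Gmap x y z (Fmap x y z A B C) =
    (A `|` (B `&` C), B `|` (A `&` C), C `|` (A `&` B)).
Proof.
have rel := hV; case: rel => rel _ _.
have ex : forall a, x a = - (y a + z a).
  by move=> a; apply/eqP; rewrite -subr_eq0 opprK addrA rel.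
have ey : forall a, y a = - (x a + z a).
  by move=> a; apply/eqP; rewrite -subr_eq0 opprK addrA (addrC (y a)) rel.
have ez : forall a, z a = - (x a + y a).
  by move=> a; apply/eqP; rewrite -subr_eq0 opprK addrC rel.
have n10 : (1 : F) <> 0 by apply/eqP; rewrite oner_eq0.
have hn : forall (s : F), s = 0 -> - s = 0 by move=> s ->; rewrite oppr0.
rewrite /Gmap; congr (_, _, _); apply/seteqP; split => a /=.
- move=> hm; case: (pselect (A a)) => [|nA]; first by left.
  right; split; apply: contrapT => nD.
  + have [h _ _] := key _ _ _ _ _ _ hV A B C a (1 : F) (-1) (0) (ltac:(by rewrite ?(addrN, addNr, addr0, add0r))) (fun H => False_ind _ (nA H)) (fun H => False_ind _ (nD H)) (fun _ => erefl).
    exact: n10 (h hm).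
  + have [h _ _] := key _ _ _ _ _ _ hV A B C a (1 : F) (0) (-1) (ltac:(by rewrite ?(addrN, addNr, addr0, add0r))) (fun H => False_ind _ (nA H)) (fun _ => erefl) (fun H => False_ind _ (nD H)).
    exact: n10 (h hm).
- case=> [Aa|[Ba Ca]].
  + exists (x a + 0), 0; split; [|split; [exact: lspan0|by rewrite !addr0]].
    exists (x a), 0; split; [by apply: lspan_in; exists a|].
    by split; [exact: lspan0|rewrite addr0].
  + exists (0 + - y a), (- z a); split.
      exists 0, (- y a); split; [exact: lspan0|].
      by split=> //; apply: lspan_opp; exists a.
    by split; [apply: lspan_opp; exists a|rewrite add0r ex opprD].
- move=> hm; case: (pselect (B a)) => [|nB]; first by left.
  right; split; apply: contrapT => nD.
  + have [_ h _] := key _ _ _ _ _ _ hV A B C a (-1 : F) (1) (0) (ltac:(by rewrite ?(addrN, addNr, addr0, add0r))) (fun H => False_ind _ (nD H)) (fun H => False_ind _ (nB H)) (fun _ => erefl).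
    exact: n10 (h hm).
  + have [_ h _] := key _ _ _ _ _ _ hV A B C a (0 : F) (1) (-1) (ltac:(by rewrite ?(addrN, addNr, addr0, add0r))) (fun _ => erefl) (fun H => False_ind _ (nB H)) (fun H => False_ind _ (nD H)).
    exact: n10 (h hm).
- case=> [Ba|[Aa Ca]].
  + exists (0 + y a), 0; split; [|split; [exact: lspan0|by rewrite !addr0 add0r]].
    exists 0, (y a); split; [exact: lspan0|].
    by split; [apply: lspan_in; exists a|].
  + exists (- x a + 0), (- z a); split.
      exists (- x a), 0; split; [by apply: lspan_opp; exists a|].
      by split=> //; exact: lspan0.
    by split; [apply: lspan_opp; exists a|rewrite addr0 ey opprD].
- move=> hm; case: (pselect (C a)) => [|nC]; first by left.
  right; split; apply: contrapT => nD.
  + have [_ _ h] := key _ _ _ _ _ _ hV A B C a (-1 : F) (0) (1) (ltac:(by rewrite ?(addrN, addNr, addr0, add0r))) (fun H => False_ind _ (nD H)) (fun _ => erefl) (fun H => False_ind _ (nC H)).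
    exact: n10 (h hm).
  + have [_ _ h] := key _ _ _ _ _ _ hV A B C a (0 : F) (-1) (1) (ltac:(by rewrite ?(addrN, addNr, addr0, add0r))) (fun _ => erefl) (fun H => False_ind _ (nD H)) (fun H => False_ind _ (nC H)).
    exact: n10 (h hm).
- case=> [Ca|[Aa Ba]].
  + exists 0, (z a); split; [|split; [by apply: lspan_in; exists a|by rewrite add0r]].
    exists 0, 0; split; [exact: lspan0|].
    by split; [exact: lspan0|rewrite addr0].
  + exists (- x a + - y a), 0; split.
      exists (- x a), (- y a); split; [by apply: lspan_opp; exists a|].
      by split=> //; apply: lspan_opp; exists a.
    by split; [exact: lspan0|rewrite addr0 ez opprD].
Qed.
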